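(* Let $\alpha_1,\alpha_2\in\mathbb{C}$ with $\operatorname{Im}\alpha_2\neq0$, such that $\operatorname{Im}\alpha_1/\operatorname{Im}\alpha_2$ is an irrational non-Liouville number, $\operatorname{Re}\alpha_2\in\mathbb{Q}$, and $1,\operatorname{Re}\alpha_1,\operatorname{Im}\alpha_1/\operatorname{Im}\alpha_2$ are linearly independent over $\mathbb{Z}$. Then $L_2=D_t+\alpha_1D_x+\alpha_2D_y$ is globally hypoelliptic on $\mathbb{T}^3$, while $\mathcal{M}_2=\{\lambda\in\mathbb{C}: L_2-\lambda\text{ is not GH on }\mathbb{T}^3\}$ is a dense $\mathcal{G}_\delta$ subset of $\mathbb{C}$. In particular this holds for $D_t+(\sqrt2+i\sqrt3)D_x+(1+i)D_y$.
   Context: $\mathbb{T}^3=\mathbb{R}^3/2\pi\mathbb{Z}^3$ with variables $(t,x,y)$; $D_t=-i\partial_t$ etc. A linear differential operator $P$ on $\mathbb{T}^n$ is globally hypoelliptic (GH) if $u\in\mathcal{D}'(\mathbb{T}^n)$ and $Pu\in\mathcal{C}^\infty(\mathbb{T}^n)$ imply $u\in\mathcal{C}^\infty(\mathbb{T}^n)$. A real number $\rho$ is Liouville if it is irrational and for every $M>0$ there are infinitely many $(p,q)\in\mathbb{Z}\times\mathbb{N}$ with $|\rho-p/q|<q^{-M}$. *)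

(* Defs.v *)
From Stdlib Require Import Reals ZArith List.
From Coquelicot Require Import Coquelicot.
Open Scope R_scope.

(* Lattice Z^3 indexing Fourier modes e^{i(k t + m x + n y)} on T^3. *)
Definition Z3 := (Z * Z * Z)%type.

Definition z3norm (k : Z3) : R :=
  let '(a, b, c) := k in Rabs (IZR a) + Rabs (IZR b) + Rabs (IZR c).

(* A distribution on T^3 is identified with its Fourier coefficient sequence;
   D'(T^3) = sequences of at most polynomial growth. *)
Definition is_distribution (u : Z3 -> C) : Prop :=
  exists (M : R) (N : nat), forall k, Cmod (u k) <= M * (1 + z3norm k) ^ N.

(* C^infty(T^3) = rapidly decreasing Fourier coefficient sequences. *)
Definition is_smooth (u : Z3 -> C) : Prop :=
  forall N : nat, exists M : R, forall k, Cmod (u k) * (1 + z3norm k) ^ N <= M.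

(* Full symbol of D_t + a1 D_x + a2 D_y - lam  (D = -i d/d.) on the mode (k,m,n). *)
Definition symbol (a1 a2 lam : C) (k : Z3) : C :=
  let '(kt, kx, ky) := k in
  (RtoC (IZR kt) + a1 * RtoC (IZR kx) + a2 * RtoC (IZR ky) - lam)%C.

Definition GH (a1 a2 lam : C) : Prop :=
  forall u : Z3 -> C, is_distribution u ->
    is_smooth (fun k => (symbol a1 a2 lam k * u k)%C) -> is_smooth u.

Definition rational (x : R) : Prop :=
  exists p q : Z, q <> 0%Z /\ x = IZR p / IZR q.

Definition irrational (x : R) : Prop := ~ rational x.

(* "infinitely many (p,q)": not contained in any finite list. *)
Definition Liouville (rho : R) : Prop :=
  irrational rho /\
  forall M : R, 0 < M ->
    forall l : list (Z * nat), exists (p : Z) (q : nat),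
      ~ In (p, q) l /\ (0 < q)%nat /\
      Rabs (rho - IZR p / INR q) < Rpower (INR q) (- M).

Definition Z_lin_indep3 (x y : R) : Prop :=
  forall a b c : Z, IZR a + IZR b * x + IZR c * y = 0 ->
    a = 0%Z /\ b = 0%Z /\ c = 0%Z.

Definition openC (U : C -> Prop) : Prop :=
  forall z, U z -> exists e : R, 0 < e /\ forall w, Cmod (w - z)%C < e -> U w.

Definition denseC (S : C -> Prop) : Prop :=
  forall z (e : R), 0 < e -> exists w, S w /\ Cmod (w - z)%C < e.

Definition G_deltaC (S : C -> Prop) : Prop :=
  exists U : nat -> (C -> Prop), (forall n, openC (U n)) /\
    forall z, S z <-> forall n, U n z.

Definition M2 (a1 a2 : C) : C -> Prop := fun lam => ~ GH a1 a2 lam.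

(* Main.v *)
Require Import Defs.
From Stdlib Require Import Reals ZArith List Lra Lia Znumtheory ClassicalEpsilon Classical.
From Coquelicot Require Import Coquelicot.
Open Scope R_scope.

Lemma Cmod_le_sum (x : C) : Cmod x <= Rabs (fst x) + Rabs (snd x).
Proof.
  unfold Cmod.
  pose proof (Rabs_pos (fst x)); pose proof (Rabs_pos (snd x)).
  apply Rle_trans with (sqrt (Rsqr (Rabs (fst x) + Rabs (snd x)))).
  2:{ rewrite sqrt_Rsqr; lra. }
  apply sqrt_le_1_alt. unfold Rsqr.
  replace (fst x ^ 2) with (Rabs (fst x) * Rabs (fst x)).
  2:{ rewrite <- Rabs_mult. rewrite Rabs_right. ring. nra. }
  replace (snd x ^ 2) with (Rabs (snd x) * Rabs (snd x)).
  2:{ rewrite <- Rabs_mult. rewrite Rabs_right. ring. nra. }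
  nra.
Qed.

Lemma z3norm_ge0 k : 0 <= z3norm k.
Proof. destruct k as [[a b] c]; simpl. pose proof (Rabs_pos (IZR a)); pose proof (Rabs_pos (IZR b)); pose proof (Rabs_pos (IZR c)); lra. Qed.

Lemma symbol_eq a1 a2 lam kt kx ky :
  symbol a1 a2 lam (kt, kx, ky) =
  (IZR kt + Re a1 * IZR kx + Re a2 * IZR ky - Re lam,
   Im a1 * IZR kx + Im a2 * IZR ky - Im lam).
Proof.
  destruct a1 as [p1 q1], a2 as [p2 q2], lam as [l1 l2].
  unfold symbol, Cminus, Cplus, Cmult, Copp, RtoC, Re, Im; simpl.
  f_equal; ring.
Qed.

Lemma symbol_shift a1 a2 lam w k :
  symbol a1 a2 w k = (symbol a1 a2 lam k + (lam - w))%C.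
Proof.
  destruct k as [[kt kx] ky]. rewrite !symbol_eq.
  destruct lam, w. unfold Cminus, Cplus, Copp, Re, Im; simpl. f_equal; ring.
Qed.

Definition Un a1 a2 (n : nat) (lam : C) : Prop :=
  exists k, INR n <= z3norm k /\ Cmod (symbol a1 a2 lam k) * (1 + z3norm k) ^ n < 1.

Lemma pow_ge1 x n : 1 <= x -> 1 <= x ^ n.
Proof. intros H. induction n; simpl; nra. Qed.

Lemma notW_GH a1 a2 lam :
  (exists n, forall k, INR n <= z3norm k ->
     1 <= Cmod (symbol a1 a2 lam k) * (1 + z3norm k) ^ n) -> GH a1 a2 lam.
Proof.
  intros [n Hn] u [M0 [N0 Hu]] Hs N.
  destruct (Hs (n + N)%nat) as [M1 HM1].
  exists (Rmax M1 (M0 * (1 + INR n) ^ N0 * (1 + INR n) ^ N)).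
  intro k. pose proof (z3norm_ge0 k) as Hk0.
  pose proof (Cmod_ge_0 (u k)) as Hc0.
  destruct (Rle_lt_dec (INR n) (z3norm k)) as [Hle | Hlt].
  - apply Rle_trans with M1; [| apply Rmax_l].
    specialize (Hn k Hle). specialize (HM1 k).
    rewrite Cmod_mult, pow_add in HM1.
    pose proof (pow_ge1 (1 + z3norm k) N ltac:(lra)).
    pose proof (Cmod_ge_0 (symbol a1 a2 lam k)).
    pose proof (pow_ge1 (1 + z3norm k) n ltac:(lra)).
    apply Rle_trans with ((Cmod (symbol a1 a2 lam k) * (1 + z3norm k) ^ n) * (Cmod (u k) * (1 + z3norm k) ^ N)).
    + rewrite <- (Rmult_1_l (Cmod (u k) * _)) at 1. apply Rmult_le_compat_r; nra.
    + eapply Rle_trans; [| exact HM1]. right; ring.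
  - apply Rle_trans with (M0 * (1 + INR n) ^ N0 * (1 + INR n) ^ N); [| apply Rmax_r].
    specialize (Hu k).
    pose proof (pow_ge1 (1 + z3norm k) N0 ltac:(lra)).
    assert (HM0 : 0 <= M0) by nra.
    assert (H1 : (1 + z3norm k) ^ N0 <= (1 + INR n) ^ N0) by (apply pow_incr; lra).
    assert (H2 : (1 + z3norm k) ^ N <= (1 + INR n) ^ N) by (apply pow_incr; lra).
    pose proof (pow_ge1 (1 + z3norm k) N ltac:(lra)).
    apply Rle_trans with (M0 * (1 + z3norm k) ^ N0 * (1 + z3norm k) ^ N).
    + apply Rmult_le_compat_r; lra.
    + apply Rmult_le_compat; try nra.
Qed.

Lemma sum_term_le (f : nat -> R) n i : (forall j, 0 <= f j) -> (i <= n)%nat -> f i <= sum_f_R0 f n.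
Proof.
  intros Hf Hi. induction n.
  - assert (i = 0%nat) by lia. subst. simpl. lra.
  - simpl. destruct (Nat.eq_dec i (S n)).
    + subst. pose proof (cond_pos_sum f n Hf). lra.
    + pose proof (IHn ltac:(lia)). pose proof (Hf (S n)). lra.
Qed.

Lemma W_notGH a1 a2 lam : (forall n, Un a1 a2 n lam) -> ~ GH a1 a2 lam.
Proof.
  intros HW HGH.
  set (f := fun n => proj1_sig (constructive_indefinite_description _ (HW n))).
  assert (Hf : forall n, INR n <= z3norm (f n) /\
      Cmod (symbol a1 a2 lam (f n)) * (1 + z3norm (f n)) ^ n < 1).
  { intro n. unfold f. destruct (constructive_indefinite_description _ (HW n)); simpl; auto. }
  set (u := fun k => if excluded_middle_informative (exists n, f n = k) then RtoC 1 else RtoC 0).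
  assert (Hsm : is_smooth u).
  { apply HGH.
    - exists 1, 0%nat. intro k. unfold u. destruct excluded_middle_informative.
      + rewrite Cmod_R, Rabs_R1. simpl; lra.
      + rewrite Cmod_R, Rabs_R0. simpl; lra.
    - intro N. exists (1 + sum_f_R0 (fun i => (1 + z3norm (f i)) ^ N) N).
      assert (Hpos : forall j, 0 <= (1 + z3norm (f j)) ^ N).
      { intro j. apply pow_le. pose proof (z3norm_ge0 (f j)); lra. }
      pose proof (cond_pos_sum _ N Hpos).
      intro k. unfold u. destruct excluded_middle_informative as [[n Hn] | Hn].
      + rewrite Cmult_1_r. subst k. destruct (Hf n) as [Hn1 Hn2].
        pose proof (z3norm_ge0 (f n)).
        pose proof (Cmod_ge_0 (symbol a1 a2 lam (f n))).
        destruct (le_lt_dec N n).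
        * assert ((1 + z3norm (f n)) ^ N <= (1 + z3norm (f n)) ^ n) by (apply Rle_pow; [lra | lia]).
          apply Rle_trans with (Cmod (symbol a1 a2 lam (f n)) * (1 + z3norm (f n)) ^ n).
          -- apply Rmult_le_compat_l; lra.
          -- lra.
        * pose proof (pow_ge1 (1 + z3norm (f n)) n ltac:(lra)).
          assert (Cmod (symbol a1 a2 lam (f n)) <= 1) by nra.
          pose proof (sum_term_le (fun i => (1 + z3norm (f i)) ^ N) N n Hpos ltac:(lia)).
          simpl in H4. pose proof (Hpos n).
          apply Rle_trans with (1 * (1 + z3norm (f n)) ^ N).
          -- apply Rmult_le_compat_r; lra.
          -- lra.
      + rewrite Cmult_0_r, Cmod_0. lra. }
  destruct (Hsm 1%nat) as [M HM].
  destruct (archimed M) as [H1 _].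
  set (n := Z.to_nat (up M)).
  assert (Hn : M < INR n + 1).
  { unfold n. destruct (Z_lt_le_dec (up M) 0).
    - assert (E : Z.to_nat (up M) = 0%nat) by lia. rewrite E. simpl. apply IZR_lt in l. lra.
    - rewrite INR_IZR_INZ, Z2Nat.id by lia. lra. }
  specialize (HM (f n)). destruct (Hf n) as [Hn1 _].
  unfold u in HM. destruct excluded_middle_informative as [_ | Hc].
  - rewrite Cmod_R, Rabs_R1 in HM. simpl in HM. lra.
  - apply Hc. exists n; reflexivity.
Qed.

Lemma M2_iff a1 a2 lam : M2 a1 a2 lam <-> forall n, Un a1 a2 n lam.
Proof.
  split.
  - intros HM n. apply NNPP. intro Hn. apply HM. apply notW_GH. exists n.
    intros k Hk. apply Rnot_lt_le. intro Hlt. apply Hn. exists k. auto.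
  - intros HW. apply W_notGH. exact HW.
Qed.

Lemma Un_open a1 a2 n : openC (Un a1 a2 n).
Proof.
  intros lam [k [Hk1 Hk2]].
  set (A := (1 + z3norm k) ^ n).
  set (d := Cmod (symbol a1 a2 lam k)).
  assert (HA : 1 <= A) by (apply pow_ge1; pose proof (z3norm_ge0 k); lra).
  exists ((1 - d * A) / A). split.
  - apply Rdiv_lt_0_compat; fold A d in Hk2; lra.
  - intros w Hw. exists k. split; auto.
    rewrite (symbol_shift a1 a2 lam w k).
    pose proof (Cmod_triangle (symbol a1 a2 lam k) (lam - w)).
    assert (Cmod (lam - w) = Cmod (w - lam)).
    { rewrite <- Cmod_opp. rewrite Copp_minus_distr. reflexivity. }
    fold A d in Hk2 |- *.
    assert (Cmod (w - lam) * A < 1 - d * A).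
    { apply Rmult_lt_compat_r with (r := A) in Hw; [| lra]. unfold Rdiv in Hw.
      rewrite Rmult_assoc, Rinv_l in Hw by lra. lra. }
    apply Rle_lt_trans with ((d + Cmod (w - lam)) * A).
    + apply Rmult_le_compat_r; [lra|]. unfold d. lra.
    + lra.
Qed.

Lemma Cmod_sub_tri (w v c : C) : Cmod (w - c) <= Cmod (w - v) + Cmod (v - c).
Proof.
  replace (w - c)%C with ((w - v) + (v - c))%C by ring. apply Cmod_triangle.
Qed.

Lemma Cmod_sub_sym (w v : C) : Cmod (w - v) = Cmod (v - w).
Proof. rewrite <- Cmod_opp, Copp_minus_distr. reflexivity. Qed.

Definition stepP (U : nat -> C -> Prop) n (c : C) (r : R) (p : C * R) : Prop :=
  0 < snd p /\ snd p <= r / 2 /\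
  (forall w, Cmod (w - fst p) <= 2 * snd p -> U n w) /\
  (forall w, Cmod (w - fst p) <= snd p -> Cmod (w - c) <= r).

Lemma step_ex U (HO : forall n, openC (U n)) (HD : forall n, denseC (U n)) n c r :
  0 < r -> exists p, stepP U n c r p.
Proof.
  intros Hr.
  destruct (HD n c (r / 2) ltac:(lra)) as [w0 [Hw0 Hwc]].
  destruct (HO n w0 Hw0) as [e0 [He0 Hball]].
  exists (w0, Rmin (e0 / 4) (r / 4)). unfold stepP; simpl.
  pose proof (Rmin_l (e0 / 4) (r / 4)); pose proof (Rmin_r (e0 / 4) (r / 4)).
  assert (0 < Rmin (e0 / 4) (r / 4)) by (apply Rmin_glb_lt; lra).
  repeat split; try lra.
  - intros w Hw. apply Hball. lra.
  - intros w Hw. pose proof (Cmod_sub_tri w w0 c). lra.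
Qed.

Lemma lim_le_aux (u : nat -> R) l a r n :
  Un_cv u l -> (forall m, (n <= m)%nat -> Rabs (u m - a) <= r) -> Rabs (l - a) <= r.
Proof.
  intros Hcv Hb. apply Rnot_lt_le. intro Hlt.
  destruct (Hcv (Rabs (l - a) - r) ltac:(lra)) as [N HN].
  specialize (HN (max n N) ltac:(lia)). specialize (Hb (max n N) ltac:(lia)).
  unfold Rdist in HN.
  pose proof (Rabs_triang (l - u (max n N)) (u (max n N) - a)).
  replace (l - u (max n N) + (u (max n N) - a)) with (l - a) in H by ring.
  rewrite Rabs_minus_sym in HN. lra.
Qed.

Lemma im_le_Cmod' (c : C) : Rabs (snd c) <= Cmod c.
Proof.
  destruct c as [x y]. unfold Cmod; simpl.
  rewrite <- sqrt_Rsqr_abs. apply sqrt_le_1_alt. unfold Rsqr.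
  pose proof (pow2_ge_0 x). nra.
Qed.

Lemma re_le_Cmod' (c : C) : Rabs (fst c) <= Cmod c.
Proof. apply re_le_Cmod. Qed.

Lemma baire (U : nat -> C -> Prop) :
  (forall n, openC (U n)) -> (forall n, denseC (U n)) -> denseC (fun z => forall n, U n z).
Proof.
  intros HO HD z e He.
  assert (Hs : forall n c r, 0 < r -> {p | stepP U n c r p}).
  { intros n c r Hr. apply constructive_indefinite_description. apply step_ex; auto. }
  set (stepf := fun n (p : C * R) =>
    match Rlt_dec 0 (snd p) with
    | left H => proj1_sig (Hs n (fst p) (snd p) H)
    | right _ => p end).
  set (sq := fix sq (n : nat) : C * R :=
    match n with O => (z, e / 4) | S n => stepf n (sq n) end).
  assert (Hinv : forall n, 0 < snd (sq n) /\ stepP U n (fst (sq n)) (snd (sq n)) (sq (S n))).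
  { induction n.
    - simpl sq at 1. simpl fst; simpl snd.
      assert (H0 : 0 < e / 4) by lra. split; auto.
      change (sq 1%nat) with (stepf 0%nat (z, e / 4)). unfold stepf. simpl fst; simpl snd.
      destruct (Rlt_dec 0 (e / 4)); [| lra].
      destruct (Hs 0%nat z (e / 4) r); simpl; auto.
    - destruct IHn as [Hpos Hst].
      assert (Hp : 0 < snd (sq (S n))) by (destruct Hst; auto).
      split; auto.
      change (sq (S (S n))) with (stepf (S n) (sq (S n))). unfold stepf.
      destruct (Rlt_dec 0 (snd (sq (S n)))); [| lra].
      destruct (Hs (S n) (fst (sq (S n))) (snd (sq (S n))) r); simpl; auto. }
  set (c := fun n => fst (sq n)). set (r := fun n => snd (sq n)).
  assert (Hr0 : r 0%nat = e / 4) by reflexivity.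
  assert (Hc0 : c 0%nat = z) by reflexivity.
  assert (Hrb : forall n, r n <= e / (4 * (INR n + 1))).
  { induction n.
    - rewrite Hr0. simpl. right; field.
    - destruct (Hinv n) as [_ [_ [H2 _]]]. fold (r (S n)) in H2. fold (r n) in H2.
      rewrite S_INR. pose proof (pos_INR n).
      apply Rle_trans with (r n / 2); [lra|].
      apply Rle_trans with (e / (4 * (INR n + 1)) / 2); [lra|].
      unfold Rdiv. rewrite Rmult_assoc. apply Rmult_le_compat_l; [lra|].
      rewrite <- Rinv_mult. apply Rinv_le_contravar; nra. }
  assert (Hnest : forall n m, (n <= m)%nat -> forall w, Cmod (w - c m) <= r m -> Cmod (w - c n) <= r n).
  { intros n m Hnm. induction Hnm; auto.
    intros w Hw. apply IHHnm. destruct (Hinv m) as [_ [_ [_ [_ H4]]]]. apply H4. exact Hw. }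
  assert (Hcm : forall n m, (n <= m)%nat -> Cmod (c m - c n) <= r n).
  { intros n m Hnm. apply (Hnest n m Hnm). unfold Cminus. rewrite Cplus_opp_r, Cmod_0.
    destruct (Hinv m); unfold r; lra. }
  assert (Hrsmall : forall eps, 0 < eps -> exists N, r N < eps).
  { intros eps Heps. destruct (archimed (e / eps)) as [H1 _].
    exists (Z.to_nat (up (e / eps))).
    eapply Rle_lt_trans; [apply Hrb|].
    assert (Hx : e / eps < INR (Z.to_nat (up (e / eps))) + 1).
    { destruct (Z_lt_le_dec (up (e / eps)) 0).
      - assert (E : Z.to_nat (up (e / eps)) = 0%nat) by lia. rewrite E. simpl.
        apply IZR_lt in l. lra.
      - rewrite INR_IZR_INZ, Z2Nat.id by lia. lra. }
    set (t := INR (Z.to_nat (up (e / eps))) + 1) in *.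
    assert (0 < t) by (unfold t; pose proof (pos_INR (Z.to_nat (up (e / eps)))); lra).
    apply Rmult_lt_compat_r with (r := eps) in Hx; [| lra].
    unfold Rdiv in Hx. rewrite Rmult_assoc, Rinv_l, Rmult_1_r in Hx by lra.
    apply (Rmult_lt_reg_r (4 * t)); [lra|].
    unfold Rdiv. rewrite Rmult_assoc, Rinv_l by lra. lra. }
  assert (Hcauchy : forall (g : C -> R), (forall x, Rabs (g x) <= Cmod x) ->
            (forall x y, g (x - y)%C = g x - g y) -> Cauchy_crit (fun n => g (c n))).
  { intros g Hg Hlin eps Heps. destruct (Hrsmall (eps / 2) ltac:(lra)) as [N HN].
    exists N. intros n m Hn Hm. unfold Rdist.
    replace (g (c n) - g (c m)) with ((g (c n) - g (c N)) - (g (c m) - g (c N))) by ring.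
    eapply Rle_lt_trans; [apply Rabs_triang|]. rewrite Rabs_Ropp.
    rewrite <- !Hlin.
    pose proof (Hg (c n - c N)%C). pose proof (Hg (c m - c N)%C).
    pose proof (Hcm N n Hn). pose proof (Hcm N m Hm). lra. }
  destruct (Rcomplete.R_complete (fun n => fst (c n))
     (Hcauchy fst re_le_Cmod' (fun x y => eq_refl))) as [l1 Hl1].
  destruct (Rcomplete.R_complete (fun n => snd (c n))
     (Hcauchy snd im_le_Cmod' (fun x y => eq_refl))) as [l2 Hl2].
  assert (Hlim : forall n, Cmod ((l1, l2) - c n) <= 2 * r n).
  { intro n. eapply Rle_trans; [apply Cmod_le_sum|]. simpl.
    assert (Rabs (l1 - fst (c n)) <= r n).
    { apply (lim_le_aux _ _ _ _ n Hl1). intros m Hm.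
      pose proof (Hcm n m Hm). pose proof (re_le_Cmod' (c m - c n)). simpl in H0. exact (Rle_trans _ _ _ H0 H). }
    assert (Rabs (l2 - snd (c n)) <= r n).
    { apply (lim_le_aux _ _ _ _ n Hl2). intros m Hm.
      pose proof (Hcm n m Hm). pose proof (im_le_Cmod' (c m - c n)). simpl in H1. exact (Rle_trans _ _ _ H1 H0). }
    unfold Rminus in *. lra. }
  exists (l1, l2). split.
  - intro n. destruct (Hinv n) as [_ [_ [_ [H3 _]]]]. apply H3. apply Hlim.
  - pose proof (Hlim 0%nat). rewrite Hr0, Hc0 in H. lra.
Qed.

Lemma pigeon : forall N (f : nat -> nat), (forall i, (i <= N)%nat -> (f i < N)%nat) ->
  exists i j, (i < j <= N)%nat /\ f i = f j.
Proof.
  induction N as [|N IH]; intros f Hf.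
  - specialize (Hf 0%nat ltac:(lia)). lia.
  - set (v := f (S N)).
    destruct (classic (exists i, (i <= N)%nat /\ f i = v)) as [[i [Hi Hiv]] | Hno].
    + exists i, (S N). split; [lia | exact Hiv].
    + set (g := fun i => if Nat.ltb (f i) v then f i else (f i - 1)%nat).
      assert (Hne : forall i, (i <= N)%nat -> f i <> v).
      { intros i Hi E. apply Hno. exists i. auto. }
      destruct (IH g) as [i [j [Hij Hg]]].
      { intros i Hi. unfold g. pose proof (Hf i ltac:(lia)). pose proof (Hne i Hi).
        pose proof (Hf (S N) ltac:(lia)). fold v in H1.
        destruct (Nat.ltb_spec (f i) v); lia. }
      exists i, j. split; [lia|].
      pose proof (Hne i ltac:(lia)). pose proof (Hne j ltac:(lia)).
      unfold g in Hg. destruct (Nat.ltb_spec (f i) v), (Nat.ltb_spec (f j) v); lia.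
Qed.

Definition fl (x : R) : Z := (up x - 1)%Z.

Lemma fl_spec x : IZR (fl x) <= x < IZR (fl x) + 1.
Proof.
  unfold fl. destruct (archimed x) as [H1 H2]. rewrite minus_IZR. simpl. lra.
Qed.

Lemma fl_same x y : fl x = fl y -> Rabs (x - y) < 1.
Proof.
  intros E. pose proof (fl_spec x); pose proof (fl_spec y). rewrite E in *.
  apply Rabs_def1; lra.
Qed.

Lemma fl_range (x : R) (N : Z) : 0 <= x < IZR N -> (0 <= fl x < N)%Z.
Proof.
  intros [H1 H2]. pose proof (fl_spec x) as [H3 H4]. split.
  - apply le_IZR. assert (-1 < IZR (fl x)) by lra.
    apply lt_IZR in H. simpl in H. apply IZR_le. lia.
  - apply lt_IZR. lra.
Qed.

Lemma cell_inj p q p' q' n : (0 <= q < n)%Z -> (0 <= q' < n)%Z -> (0 <= p)%Z -> (0 <= p')%Z ->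
  Z.to_nat (p * n + q) = Z.to_nat (p' * n + q') -> p = p' /\ q = q'.
Proof.
  intros Hq Hq' Hp Hp' E. apply Z2Nat.inj in E; [| nia | nia].
  assert (p = p') by nia. subst. split; lia.
Qed.

Lemma dir2 (al be : R) (N : nat) : (0 < N)%nat ->
  exists m a b : Z, (0 < m)%Z /\ Rabs (IZR m * al - IZR a) < / INR N /\
                    Rabs (IZR m * be - IZR b) < / INR N.
Proof.
  intros HN.
  assert (HNr : 0 < INR N) by (apply lt_0_INR; lia).
  set (frac := fun x => x - IZR (fl x)).
  assert (Hfrac : forall x, 0 <= frac x < 1).
  { intro x. unfold frac. pose proof (fl_spec x). lra. }
  set (cx := fun i : nat => fl (INR N * frac (INR i * al))).
  set (cy := fun i : nat => fl (INR N * frac (INR i * be))).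
  assert (Hc : forall x, (0 <= fl (INR N * frac x) < Z.of_nat N)%Z).
  { intro x. apply fl_range. rewrite <- INR_IZR_INZ. pose proof (Hfrac x). nra. }
  set (cell := fun i => Z.to_nat (cx i * Z.of_nat N + cy i)).
  destruct (pigeon (N * N) cell) as [i [j [Hij Hcell]]].
  { intros i _. unfold cell. pose proof (Hc (INR i * al)). pose proof (Hc (INR i * be)).
    fold (cx i) in H. fold (cy i) in H0.
    revert H H0. generalize (cx i) (cy i). intros p q Hp Hq.
    assert (0 <= p * Z.of_nat N + q < Z.of_nat N * Z.of_nat N)%Z by nia.
    apply Nat2Z.inj_lt. rewrite Z2Nat.id by lia. rewrite Nat2Z.inj_mul. lia. }
  unfold cell in Hcell.
  pose proof (Hc (INR i * al)) as Hxi. pose proof (Hc (INR i * be)) as Hyi.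
  pose proof (Hc (INR j * al)) as Hxj. pose proof (Hc (INR j * be)) as Hyj.
  fold (cx i) (cx j) (cy i) (cy j) in *.
  assert (Ex : cx i = cx j /\ cy i = cy j).
  { apply (cell_inj _ _ _ _ (Z.of_nat N)); try lia. }
  destruct Ex as [Ex Ey].
  apply fl_same in Ex. apply fl_same in Ey.
  exists (Z.of_nat j - Z.of_nat i)%Z, (fl (INR j * al) - fl (INR i * al))%Z,
         (fl (INR j * be) - fl (INR i * be))%Z.
  assert (Hm : IZR (Z.of_nat j - Z.of_nat i) = INR j - INR i).
  { rewrite minus_IZR, <- !INR_IZR_INZ. reflexivity. }
  split; [lia|]. rewrite Hm, !minus_IZR.
  assert (Hinv : forall t, Rabs (INR N * t) < 1 -> Rabs t < / INR N).
  { intros t Ht. rewrite Rabs_mult, Rabs_right in Ht by lra.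
    apply Rmult_lt_reg_l with (INR N); [lra|]. rewrite Rinv_r by lra. lra. }
  split; apply Hinv.
  - replace (INR N * ((INR j - INR i) * al - (IZR (fl (INR j * al)) - IZR (fl (INR i * al)))))
      with (- (INR N * frac (INR i * al) - INR N * frac (INR j * al))) by (unfold frac; ring).
    rewrite Rabs_Ropp. exact Ex.
  - replace (INR N * ((INR j - INR i) * be - (IZR (fl (INR j * be)) - IZR (fl (INR i * be)))))
      with (- (INR N * frac (INR i * be) - INR N * frac (INR j * be))) by (unfold frac; ring).
    rewrite Rabs_Ropp. exact Ey.
Qed.

Lemma abs_comb a b x y : 0 <= a <= 1 -> 0 <= b <= 1 -> Rabs (a * x + b * y) <= Rabs x + Rabs y.
Proof.
  intros Ha Hb. eapply Rle_trans; [apply Rabs_triang|]. rewrite !Rabs_mult.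
  rewrite (Rabs_right a), (Rabs_right b) by lra.
  pose proof (Rabs_pos x); pose proof (Rabs_pos y). nra.
Qed.

Lemma cover x1 y1 w1 w2 X Y : x1 * w2 - y1 * w1 <> 0 ->
  exists s t : Z, Rabs (X - (IZR s * x1 + IZR t * w1)) <= Rabs x1 + Rabs w1 /\
                  Rabs (Y - (IZR s * y1 + IZR t * w2)) <= Rabs y1 + Rabs w2.
Proof.
  intros HD. set (D := x1 * w2 - y1 * w1) in *.
  set (sr := (X * w2 - Y * w1) / D). set (tr := (x1 * Y - y1 * X) / D).
  exists (fl sr), (fl tr).
  pose proof (fl_spec sr); pose proof (fl_spec tr).
  split.
  - replace (X - (IZR (fl sr) * x1 + IZR (fl tr) * w1))
      with ((sr - IZR (fl sr)) * x1 + (tr - IZR (fl tr)) * w1).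
    + apply abs_comb; lra.
    + unfold sr, tr, D in *. field. auto.
  - replace (Y - (IZR (fl sr) * y1 + IZR (fl tr) * w2))
      with ((sr - IZR (fl sr)) * y1 + (tr - IZR (fl tr)) * w2).
    + apply abs_comb; lra.
    + unfold sr, tr, D in *. field. auto.
Qed.

Lemma small_N eps : 0 < eps -> exists N : nat, (0 < N)%nat /\ / INR N <= eps.
Proof.
  intros He. destruct (archimed (/ eps)) as [H1 _].
  exists (S (Z.to_nat (up (/ eps)))). split; [lia|].
  assert (Hx : / eps < INR (S (Z.to_nat (up (/ eps))))).
  { rewrite S_INR. destruct (Z_lt_le_dec (up (/ eps)) 0).
    - assert (E : Z.to_nat (up (/ eps)) = 0%nat) by lia. rewrite E. simpl.
      apply IZR_lt in l. lra.
    - rewrite INR_IZR_INZ, Z2Nat.id by lia. lra. }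
  apply Rle_trans with (/ / eps); [| rewrite Rinv_inv; lra].
  apply Rinv_le_contravar.
  - apply Rinv_0_lt_compat; lra.
  - lra.
Qed.

Lemma kron2 (al be : R) :
  (forall a b c : Z, IZR a + IZR b * al + IZR c * be = 0 -> a = 0%Z /\ b = 0%Z /\ c = 0%Z) ->
  forall X Y e, 0 < e -> exists a b m : Z,
    Rabs (IZR a + IZR m * al - X) < e /\ Rabs (IZR b + IZR m * be - Y) < e.
Proof.
  intros Hind X Y e He.
  set (eps := e / 4).
  destruct (small_N eps ltac:(unfold eps; lra)) as [N [HN HNe]].
  destruct (dir2 al be N HN) as [n1 [a1 [b1 [Hn1 [Hx1 Hy1]]]]].
  set (x1 := IZR n1 * al - IZR a1) in *. set (y1 := IZR n1 * be - IZR b1) in *.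
  assert (Hrel : forall P Q : Z, IZR Q * x1 = IZR P * y1 -> Q = 0%Z /\ P = 0%Z).
  { intros P Q E.
    destruct (Hind (- Q * a1 + P * b1)%Z (Q * n1)%Z (- (P * n1))%Z) as [_ [E1 E2]].
    { rewrite !plus_IZR, !mult_IZR, !opp_IZR, !mult_IZR. unfold x1, y1 in E. lra. }
    split; nia. }
  assert (Hx1nz : x1 <> 0).
  { intro E. destruct (Hrel 0%Z 1%Z) as [E1 _]; [rewrite E; lra | lia]. }
  destruct (dir2 (y1 / x1) 0 N HN) as [j [l [_ [Hj [Hl _]]]]].
  set (phi := x1 * IZR l - y1 * IZR j).
  assert (Hphi : phi <> 0).
  { intro E. destruct (Hrel j l) as [_ E2]; [unfold phi in E; lra | lia]. }
  assert (Hphib : Rabs phi < Rabs x1 * eps).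
  { replace phi with (- (x1 * (IZR j * (y1 / x1) - IZR l))) by (unfold phi; field; auto).
    rewrite Rabs_Ropp, Rabs_mult. apply Rmult_lt_compat_l.
    - apply Rabs_pos_lt; auto.
    - lra. }
  set (k := fl (IZR j / x1)).
  pose proof (fl_spec (IZR j / x1)) as Hk. fold k in Hk.
  set (w1 := IZR j - IZR k * x1). set (w2 := IZR l - IZR k * y1).
  assert (Hw1 : Rabs w1 <= Rabs x1).
  { replace w1 with ((IZR j / x1 - IZR k) * x1) by (unfold w1; field; auto).
    rewrite Rabs_mult. rewrite (Rabs_right (IZR j / x1 - IZR k)) by lra.
    pose proof (Rabs_pos x1). nra. }
  assert (Hw2 : Rabs w2 < eps + Rabs y1).
  { replace w2 with (phi / x1 + (IZR j / x1 - IZR k) * y1) by (unfold w2, phi; field; auto).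
    eapply Rle_lt_trans; [apply Rabs_triang|].
    rewrite Rabs_mult, (Rabs_right (IZR j / x1 - IZR k)) by lra.
    unfold Rdiv. rewrite Rabs_mult, Rabs_inv.
    assert (0 < Rabs x1) by (apply Rabs_pos_lt; auto).
    assert (Rabs phi * / Rabs x1 < eps).
    { apply Rmult_lt_reg_r with (Rabs x1); [lra|]. rewrite Rmult_assoc, Rinv_l by lra. lra. }
    pose proof (Rabs_pos y1).
    assert ((IZR j * / x1 - IZR k) * Rabs y1 <= Rabs y1) by (unfold Rdiv in Hk; nra).
    lra. }
  assert (HD : x1 * w2 - y1 * w1 <> 0).
  { replace (x1 * w2 - y1 * w1) with phi by (unfold phi, w1, w2; ring). auto. }
  destruct (cover x1 y1 w1 w2 X Y HD) as [s [t [Hs Ht]]].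
  exists (- s * a1 + t * (j + k * a1))%Z, (- s * b1 + t * (l + k * b1))%Z, (s * n1 - t * (k * n1))%Z.
  assert (HNe' : / INR N <= eps) by exact HNe.
  split.
  - replace (IZR (- s * a1 + t * (j + k * a1)) + IZR (s * n1 - t * (k * n1)) * al - X)
      with (- (X - (IZR s * x1 + IZR t * w1))).
    + rewrite Rabs_Ropp. unfold eps in *. lra.
    + unfold w1, x1. rewrite !plus_IZR, !minus_IZR, !mult_IZR, !plus_IZR, !mult_IZR, !opp_IZR. ring.
  - replace (IZR (- s * b1 + t * (l + k * b1)) + IZR (s * n1 - t * (k * n1)) * be - Y)
      with (- (Y - (IZR s * y1 + IZR t * w2))).
    + rewrite Rabs_Ropp. unfold eps in *. lra.
    + unfold w2, y1. rewrite !plus_IZR, !minus_IZR, !mult_IZR, !plus_IZR, !mult_IZR, !opp_IZR. ring.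
Qed.

Lemma fold_min_pos {A} (g : A -> R) l : (forall x, 0 < g x) ->
  0 < fold_right (fun x acc => Rmin (g x) acc) 1 l.
Proof.
  intros Hg. induction l; simpl; [lra|]. apply Rmin_glb_lt; auto.
Qed.

Lemma fold_min_le {A} (g : A -> R) l x : In x l ->
  fold_right (fun x acc => Rmin (g x) acc) 1 l <= g x.
Proof.
  induction l; simpl; [tauto|]. intros [E | H].
  - subst. apply Rmin_l.
  - eapply Rle_trans; [apply Rmin_r | auto].
Qed.

Lemma up_pos_nat M : 0 < M -> M <= INR (Z.to_nat (up M)).
Proof.
  intros HM. destruct (archimed M) as [H1 _].
  assert (0 < up M)%Z by (apply lt_IZR; lra).
  rewrite INR_IZR_INZ, Z2Nat.id by lia. lra.
Qed.

Lemma nonliou_bound rho : irrational rho -> ~ Liouville rho ->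
  exists c, 0 < c <= 1 /\ exists Nn : nat, forall (p : Z) (q : nat), (0 < q)%nat ->
    c / INR q ^ Nn <= Rabs (rho - IZR p / INR q).
Proof.
  intros Hirr HL.
  assert (Hex : exists M, 0 < M /\ exists l, forall p q, ~ In (p, q) l -> (0 < q)%nat ->
             Rpower (INR q) (- M) <= Rabs (rho - IZR p / INR q)).
  { apply NNPP; intro H. apply HL. split; auto. intros M HM l. apply NNPP; intro H2.
    apply H. exists M. split; auto. exists l. intros p q Hin Hq. apply Rnot_lt_le.
    intro Hlt. apply H2. exists p, q. auto. }
  destruct Hex as [M [HM [l Hl]]].
  set (g := fun pq : Z * nat => let (p, q) := pq in
              if Nat.ltb 0 q then Rabs (rho - IZR p / INR q) else 1).
  assert (Hg : forall x, 0 < g x).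
  { intros [p q]. unfold g. destruct (Nat.ltb_spec 0 q); [| lra].
    apply Rabs_pos_lt. intro E. apply Hirr. exists p, (Z.of_nat q). split; [lia|].
    rewrite <- INR_IZR_INZ. lra. }
  set (cl := fold_right (fun x acc => Rmin (g x) acc) 1 l).
  assert (Hcl : 0 < cl) by (apply fold_min_pos; auto).
  exists (Rmin 1 cl). split; [split; [apply Rmin_glb_lt; lra | apply Rmin_l] |].
  exists (Z.to_nat (up M)). intros p q Hq.
  assert (Hq1 : 1 <= INR q) by (apply (le_INR 1); lia).
  assert (HqN : 1 <= INR q ^ Z.to_nat (up M)) by (apply pow_ge1; lra).
  assert (Hc1 : Rmin 1 cl <= 1) by apply Rmin_l.
  assert (Hc0 : 0 < Rmin 1 cl) by (apply Rmin_glb_lt; lra).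
  assert (Hdiv : Rmin 1 cl / INR q ^ Z.to_nat (up M) <= Rmin 1 cl).
  { unfold Rdiv. rewrite <- (Rmult_1_r (Rmin 1 cl)) at 2. apply Rmult_le_compat_l; [lra|].
    rewrite <- Rinv_1. apply Rinv_le_contravar; lra. }
  destruct (classic (In (p, q) l)) as [Hin | Hnin].
  - pose proof (fold_min_le g l _ Hin). fold cl in H. unfold g in H.
    destruct (Nat.ltb_spec 0 q); [| lia]. pose proof (Rmin_r 1 cl). lra.
  - specialize (Hl p q Hnin Hq). rewrite Rpower_Ropp in Hl.
    assert (Rpower (INR q) M <= INR q ^ Z.to_nat (up M)).
    { rewrite <- Rpower_pow by lra. apply Rle_Rpower; [lra|]. apply up_pos_nat; auto. }
    assert (0 < Rpower (INR q) M) by (unfold Rpower; apply exp_pos).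
    assert (/ INR q ^ Z.to_nat (up M) <= / Rpower (INR q) M) by (apply Rinv_le_contravar; lra).
    unfold Rdiv. apply Rle_trans with (1 * / INR q ^ Z.to_nat (up M)).
    + apply Rmult_le_compat_r; [| lra]. left. apply Rinv_0_lt_compat. lra.
    + lra.
Qed.

Lemma abs_IZR_ge1 z : z <> 0%Z -> 1 <= Rabs (IZR z).
Proof. intros H. rewrite <- abs_IZR. apply IZR_le. lia. Qed.

Lemma lin_bound rho c0 Nn :
  (forall (p : Z) (q : nat), (0 < q)%nat -> c0 / INR q ^ Nn <= Rabs (rho - IZR p / INR q)) ->
  forall kx ky, kx <> 0%Z -> c0 / Rabs (IZR kx) ^ Nn <= Rabs (rho * IZR kx + IZR ky).
Proof.
  intros H kx ky Hkx.
  set (q := Z.to_nat (Z.abs kx)).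
  assert (Hq : INR q = Rabs (IZR kx)).
  { unfold q. rewrite INR_IZR_INZ, Z2Nat.id by lia. apply abs_IZR. }
  assert (Hq0 : (0 < q)%nat) by (unfold q; lia).
  pose proof (abs_IZR_ge1 kx Hkx) as Hq1.
  destruct (Z_lt_le_dec 0 kx) as [Hpos | Hneg].
  - specialize (H (- ky)%Z q Hq0). rewrite Hq in H.
    rewrite Rabs_right in H |- * by (apply Rle_ge, IZR_le; lia).
    replace (rho * IZR kx + IZR ky) with (IZR kx * (rho - IZR (- ky) / IZR kx)).
    2:{ rewrite opp_IZR. field. apply not_0_IZR; auto. }
    rewrite Rabs_mult, (Rabs_right (IZR kx)) by (apply Rle_ge, IZR_le; lia).
    rewrite (Rabs_right (IZR kx)) in Hq1 by (apply Rle_ge, IZR_le; lia).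
    pose proof (Rabs_pos (rho - IZR (- ky) / IZR kx)). nra.
  - assert (kx < 0)%Z by lia.
    specialize (H ky q Hq0). rewrite Hq in H.
    rewrite Rabs_left in H |- * by (apply IZR_lt; lia).
    replace (rho * IZR kx + IZR ky) with (- (- IZR kx * (rho - IZR ky / - IZR kx))).
    2:{ field. apply not_0_IZR; auto. }
    rewrite Rabs_Ropp, Rabs_mult, (Rabs_right (- IZR kx)).
    2:{ apply Rle_ge. assert (IZR kx < 0) by (apply IZR_lt; lia). lra. }
    rewrite (Rabs_left (IZR kx)) in Hq1 by (apply IZR_lt; lia).
    pose proof (Rabs_pos (rho - IZR ky / - IZR kx)). nra.
Qed.

Lemma symbol_LB a1 a2 : Im a2 <> 0 -> irrational (Im a1 / Im a2) -> ~ Liouville (Im a1 / Im a2) ->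
  exists c, 0 < c /\ exists N : nat, forall k, k <> (0%Z, 0%Z, 0%Z) ->
    c <= Cmod (symbol a1 a2 (RtoC 0) k) * (1 + z3norm k) ^ N.
Proof.
  intros Hc2 Hirr HL.
  destruct (nonliou_bound _ Hirr HL) as [c0 [[Hc0 Hc01] [Nn HB]]].
  set (rho := Im a1 / Im a2) in *.
  assert (Ha2 : 0 < Rabs (Im a2)) by (apply Rabs_pos_lt; auto).
  exists (Rmin (Rmin (Rabs (Im a2) * c0) (Rabs (Im a2))) 1).
  split. { apply Rmin_glb_lt; [apply Rmin_glb_lt|]; nra. }
  exists Nn. intros [[kt kx] ky] Hk.
  pose proof (Rmin_l (Rmin (Rabs (Im a2) * c0) (Rabs (Im a2))) 1) as M1.
  pose proof (Rmin_r (Rmin (Rabs (Im a2) * c0) (Rabs (Im a2))) 1) as M2.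
  pose proof (Rmin_l (Rabs (Im a2) * c0) (Rabs (Im a2))) as M3.
  pose proof (Rmin_r (Rabs (Im a2) * c0) (Rabs (Im a2))) as M4.
  set (cc := Rmin (Rmin (Rabs (Im a2) * c0) (Rabs (Im a2))) 1) in *.
  set (nk := z3norm (kt, kx, ky)).
  assert (Hnk : nk = Rabs (IZR kt) + Rabs (IZR kx) + Rabs (IZR ky)) by reflexivity.
  pose proof (Rabs_pos (IZR kt)); pose proof (Rabs_pos (IZR kx)); pose proof (Rabs_pos (IZR ky)).
  set (P := (1 + nk) ^ Nn).
  assert (HP : 1 <= P) by (apply pow_ge1; lra).
  rewrite symbol_eq. simpl Re; simpl Im.
  set (S := (IZR kt + Re a1 * IZR kx + Re a2 * IZR ky - 0,
             Im a1 * IZR kx + Im a2 * IZR ky - 0)).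
  assert (HRe : Rabs (IZR kt + Re a1 * IZR kx + Re a2 * IZR ky - 0) <= Cmod S) by exact (re_le_Cmod S).
  assert (HIm : Rabs (Im a1 * IZR kx + Im a2 * IZR ky - 0) <= Cmod S) by exact (im_le_Cmod' S).
  clearbody S.
  destruct (Z.eq_dec kx 0) as [Ex | Nx].
  - subst kx. destruct (Z.eq_dec ky 0) as [Ey | Ny].
    + subst ky. assert (kt <> 0%Z) by (intro; subst; apply Hk; reflexivity).
      pose proof (abs_IZR_ge1 kt H2).
      replace (IZR kt + Re a1 * IZR 0 + Re a2 * IZR 0 - 0) with (IZR kt) in HRe by ring.
      assert (1 <= Cmod S) by lra. nra.
    + pose proof (abs_IZR_ge1 ky Ny).
      replace (Im a1 * IZR 0 + Im a2 * IZR ky - 0) with (Im a2 * IZR ky) in HIm by ring.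
      rewrite Rabs_mult in HIm.
      assert (Rabs (Im a2) <= Cmod S) by nra. nra.
  - pose proof (lin_bound rho c0 Nn HB kx ky Nx) as HL1.
    replace (Im a1 * IZR kx + Im a2 * IZR ky - 0) with (Im a2 * (rho * IZR kx + IZR ky)) in HIm
      by (unfold rho; field; auto).
    rewrite Rabs_mult in HIm.
    pose proof (abs_IZR_ge1 kx Nx).
    assert (Hpk : Rabs (IZR kx) ^ Nn <= P) by (apply pow_incr; lra).
    assert (Hpk1 : 1 <= Rabs (IZR kx) ^ Nn) by (apply pow_ge1; lra).
    assert (c0 / P <= c0 / Rabs (IZR kx) ^ Nn).
    { unfold Rdiv. apply Rmult_le_compat_l; [lra|]. apply Rinv_le_contravar; lra. }
    assert (Rabs (Im a2) * (c0 / P) <= Cmod S) by nra.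
    assert (Rabs (Im a2) * c0 <= Cmod S * P).
    { replace (Rabs (Im a2) * c0) with (Rabs (Im a2) * (c0 / P) * P) by (field; lra). nra. }
    lra.
Qed.

Definition LBprop a1 a2 : Prop := exists c, 0 < c /\ exists N : nat, forall k, k <> (0%Z, 0%Z, 0%Z) ->
    c <= Cmod (symbol a1 a2 (RtoC 0) k) * (1 + z3norm k) ^ N.

Definition DSprop a1 a2 : Prop := forall z e, 0 < e -> exists k, Cmod (symbol a1 a2 (RtoC 0) k - z) < e.

Lemma GH0 a1 a2 : LBprop a1 a2 -> GH a1 a2 (RtoC 0).
Proof.
  intros [c [Hc [N HN]]]. apply notW_GH.
  exists (N + 1 + Z.to_nat (up (/ c)))%nat. intros k Hk.
  set (n := (N + 1 + Z.to_nat (up (/ c)))%nat) in *.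
  assert (Hn : / c + 1 <= INR n).
  { unfold n. rewrite !plus_INR. simpl. pose proof (pos_INR N).
    pose proof (up_pos_nat (/ c) ltac:(apply Rinv_0_lt_compat; lra)). lra. }
  pose proof (z3norm_ge0 k).
  assert (Hk0 : k <> (0%Z, 0%Z, 0%Z)).
  { intro E. subst k. simpl in Hk. rewrite Rabs_R0 in Hk.
    assert (0 < / c) by (apply Rinv_0_lt_compat; lra). lra. }
  specialize (HN k Hk0).
  replace n with (N + (n - N))%nat by (unfold n; lia).
  rewrite pow_add.
  assert (H1 : (1 + z3norm k) ^ 1 <= (1 + z3norm k) ^ (n - N)) by (apply Rle_pow; [lra | unfold n; lia]).
  rewrite pow_1 in H1.
  assert (H2 : 1 <= c * (1 + z3norm k)).
  { assert (H3 : c * (/ c + 1) <= c * (1 + z3norm k)) by (apply Rmult_le_compat_l; lra).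
    rewrite Rmult_plus_distr_l, Rinv_r in H3 by lra. lra. }
  pose proof (Cmod_ge_0 (symbol a1 a2 (RtoC 0) k)).
  assert (0 <= (1 + z3norm k) ^ N) by (apply pow_le; lra).
  rewrite <- Rmult_assoc.
  apply Rle_trans with (c * (1 + z3norm k)); auto.
  apply Rmult_le_compat; lra.
Qed.

Lemma DS_proof a1 a2 : Im a2 <> 0 -> rational (Re a2) -> Z_lin_indep3 (Re a1) (Im a1 / Im a2) ->
  DSprop a1 a2.
Proof.
  intros Hc2 [P [Q [HQ HRe]]] Hind z e He.
  set (rho := Im a1 / Im a2) in *.
  assert (HQr : IZR Q <> 0) by (apply not_0_IZR; auto).
  assert (Hind2 : forall a b c : Z, IZR a + IZR b * Re a1 + IZR c * (rho / IZR Q) = 0 ->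
             a = 0%Z /\ b = 0%Z /\ c = 0%Z).
  { intros a b c E. destruct (Hind (Q * a)%Z (Q * b)%Z c) as [E1 [E2 E3]].
    { rewrite !mult_IZR. replace (IZR Q * IZR a + IZR Q * IZR b * Re a1 + IZR c * rho)
        with (IZR Q * (IZR a + IZR b * Re a1 + IZR c * (rho / IZR Q))) by (field; auto).
      rewrite E. ring. }
    split; [nia | split; [nia | auto]]. }
  set (K := Rabs (Im a2 * IZR Q)).
  assert (HK : 0 <= K) by apply Rabs_pos.
  set (e' := e / (2 * (1 + K))).
  assert (He' : 0 < e') by (unfold e'; apply Rdiv_lt_0_compat; lra).
  destruct (kron2 (Re a1) (rho / IZR Q) Hind2 (fst z) (snd z / (Im a2 * IZR Q)) e' He')
    as [a [b [m [Ha Hb]]]].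
  exists ((a - P * b)%Z, m, (Q * b)%Z).
  eapply Rle_lt_trans; [apply Cmod_le_sum|].
  rewrite symbol_eq. simpl fst; simpl snd. simpl Re; simpl Im.
  replace (IZR (a - P * b) + Re a1 * IZR m + Re a2 * IZR (Q * b) - 0 + - fst z)
     with (IZR a + IZR m * Re a1 - fst z).
  2:{ rewrite HRe, minus_IZR, !mult_IZR. field. auto. }
  replace (Im a1 * IZR m + Im a2 * IZR (Q * b) - 0 + - snd z)
     with ((Im a2 * IZR Q) * (IZR b + IZR m * (rho / IZR Q) - snd z / (Im a2 * IZR Q))).
  2:{ unfold rho. rewrite mult_IZR. field. auto. }
  rewrite Rabs_mult. fold K.
  assert (K * Rabs (IZR b + IZR m * (rho / IZR Q) - snd z / (Im a2 * IZR Q)) <= K * e')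
    by (apply Rmult_le_compat_l; lra).
  assert (e' + K * e' = e / 2) by (unfold e'; field; lra).
  lra.
Qed.

Definition kadd (k1 k2 : Z3) : Z3 :=
  let '(a, b, c) := k1 in let '(a', b', c') := k2 in ((a + a')%Z, (b + b')%Z, (c + c')%Z).

Lemma symbol_add a1 a2 k1 k2 :
  symbol a1 a2 (RtoC 0) (kadd k1 k2) = (symbol a1 a2 (RtoC 0) k1 + symbol a1 a2 (RtoC 0) k2)%C.
Proof.
  destruct k1 as [[a b] c], k2 as [[a' b'] c']. simpl kadd. rewrite !symbol_eq.
  rewrite !plus_IZR. unfold Cplus; simpl. f_equal; ring.
Qed.

Lemma z3norm_add k1 k2 : z3norm k2 - z3norm k1 <= z3norm (kadd k1 k2).
Proof.
  destruct k1 as [[a b] c], k2 as [[a' b'] c']. simpl. rewrite !plus_IZR.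
  assert (forall x y, Rabs y - Rabs x <= Rabs (x + y)).
  { intros x y. pose proof (Rabs_triang (x + y) (- x)).
    replace (x + y + - x) with y in H by ring. rewrite Rabs_Ropp in H. lra. }
  pose proof (H (IZR a) (IZR a')); pose proof (H (IZR b) (IZR b')); pose proof (H (IZR c) (IZR c')).
  lra.
Qed.

Lemma DL a1 a2 : LBprop a1 a2 -> DSprop a1 a2 ->
  forall z e n, 0 < e -> exists k, INR n <= z3norm k /\ Cmod (symbol a1 a2 (RtoC 0) k - z) < e.
Proof.
  intros [c [Hc [N HN]]] HDS z e n He.
  destruct (HDS z (e / 2) ltac:(lra)) as [k1 Hk1].
  set (B := INR n + z3norm k1).
  assert (HB : 0 <= B) by (unfold B; pose proof (pos_INR n); pose proof (z3norm_ge0 k1); lra).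
  assert (HBN : 1 <= (1 + B) ^ N) by (apply pow_ge1; lra).
  set (d := Rmin (e / 2) (c / (1 + B) ^ N)).
  assert (Hd : 0 < d).
  { apply Rmin_glb_lt; [lra|]. apply Rdiv_lt_0_compat; lra. }
  set (p0 := (d / 2, 0) : C).
  assert (Hp0 : Cmod p0 = d / 2).
  { unfold Cmod, p0; simpl. replace (d / 2 * (d / 2 * 1) + 0 * (0 * 1)) with ((d/2)²) by (unfold Rsqr; ring).
    rewrite sqrt_Rsqr; lra. }
  destruct (HDS p0 (d / 2) ltac:(lra)) as [k2 Hk2].
  set (s2 := symbol a1 a2 (RtoC 0) k2) in *.
  assert (Hs2 : Cmod s2 < d).
  { pose proof (Cmod_triangle (s2 - p0) p0).
    replace (s2 - p0 + p0)%C with s2 in H by ring.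
    lra. }
  assert (Hk2nz : k2 <> (0%Z, 0%Z, 0%Z)).
  { intro E. assert (s2 = RtoC 0).
    { unfold s2. rewrite E, symbol_eq. unfold RtoC. simpl. f_equal; ring. }
    rewrite H in Hk2. replace (RtoC 0 - p0)%C with (- p0)%C in Hk2 by ring.
    rewrite Cmod_opp in Hk2. lra. }
  specialize (HN k2 Hk2nz). fold s2 in HN.
  assert (Hbig : B < z3norm k2).
  { apply Rnot_le_lt. intro Hle.
    assert ((1 + z3norm k2) ^ N <= (1 + B) ^ N) by (apply pow_incr; pose proof (z3norm_ge0 k2); lra).
    assert (d <= c / (1 + B) ^ N) by apply Rmin_r.
    pose proof (Cmod_ge_0 s2).
    assert (Cmod s2 * (1 + z3norm k2) ^ N < c / (1 + B) ^ N * (1 + B) ^ N).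
    { apply Rle_lt_trans with (Cmod s2 * (1 + B) ^ N).
      - apply Rmult_le_compat_l; lra.
      - apply Rmult_lt_compat_r; lra. }
    unfold Rdiv in H2. rewrite Rmult_assoc, Rinv_l, Rmult_1_r in H2 by lra. lra. }
  exists (kadd k1 k2). split.
  - pose proof (z3norm_add k1 k2). unfold B in Hbig. lra.
  - rewrite symbol_add. fold s2.
    replace (symbol a1 a2 (RtoC 0) k1 + s2 - z)%C with ((symbol a1 a2 (RtoC 0) k1 - z) + s2)%C by ring.
    eapply Rle_lt_trans; [apply Cmod_triangle|].
    assert (d <= e / 2) by apply Rmin_l. lra.
Qed.

Lemma Un_dense a1 a2 : LBprop a1 a2 -> DSprop a1 a2 -> forall n, denseC (Un a1 a2 n).
Proof.
  intros HLB HDS n z e He.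
  destruct (DL a1 a2 HLB HDS z e n He) as [k [Hk1 Hk2]].
  exists (symbol a1 a2 (RtoC 0) k). split; auto.
  exists k. split; auto.
  rewrite (symbol_shift a1 a2 (RtoC 0) (symbol a1 a2 (RtoC 0) k) k).
  replace (symbol a1 a2 (RtoC 0) k + (RtoC 0 - symbol a1 a2 (RtoC 0) k))%C with (RtoC 0) by ring.
  rewrite Cmod_0, Rmult_0_l. lra.
Qed.

Lemma general a1 a2 : LBprop a1 a2 -> DSprop a1 a2 ->
  GH a1 a2 (RtoC 0) /\ denseC (M2 a1 a2) /\ G_deltaC (M2 a1 a2).
Proof.
  intros HLB HDS. split; [apply GH0; auto|]. split.
  - intros z e He.
    destruct (baire (Un a1 a2) (Un_open a1 a2) (Un_dense a1 a2 HLB HDS) z e He) as [w [Hw1 Hw2]].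
    exists w. split; auto. apply M2_iff. auto.
  - exists (Un a1 a2). split; [apply Un_open|]. intro z. apply M2_iff.
Qed.

Lemma descent r m : prime r -> ~ (r | m)%Z -> forall q p : Z, (p * p = r * m * q * q)%Z -> q = 0%Z.
Proof.
  intros Hr Hm.
  pose proof (prime_ge_2 r Hr) as Hr2.
  assert (forall n q p, (Z.abs_nat q < n)%nat -> (p * p = r * m * q * q)%Z -> q = 0%Z).
  { induction n as [|n IH]; intros q p Hn E; [lia|].
    assert (Hdp : (r | p)%Z).
    { destruct (prime_mult r Hr p p) as [H|H]; auto.
      exists (m * q * q)%Z. rewrite E. ring. }
    destruct Hdp as [p' Hp']. subst p.
    assert (E2 : (r * (p' * p'))%Z = (m * q * q)%Z).
    { apply (Z.mul_reg_l _ _ r); [lia|].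
      transitivity (p' * r * (p' * r))%Z; [ring | rewrite E; ring]. }
    assert (Hdq : (r | q)%Z).
    { assert (Hd : (r | m * (q * q))%Z) by (exists (p' * p')%Z; rewrite Z.mul_assoc, <- E2; ring).
      destruct (prime_mult r Hr m (q * q) Hd) as [H|H]; [contradiction|].
      destruct (prime_mult r Hr q q H); auto. }
    destruct Hdq as [q' Hq']. subst q.
    assert (E3 : (p' * p' = r * m * q' * q')%Z).
    { apply (Z.mul_reg_l _ _ r); [lia|].
      rewrite E2. ring. }
    destruct (Z.eq_dec q' 0) as [->|Hq0]; [lia|].
    assert (IHq := IH q' p'). rewrite IHq; [lia | | exact E3].
    rewrite Zabs2Nat.inj_mul in Hn. nia. }
  intros q p E. apply (H (S (Z.abs_nat q)) q p); auto.
Qed.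

Lemma no_sq2 p q : (p * p = 2 * q * q)%Z -> q = 0%Z.
Proof.
  intros E. apply (descent 2 1 prime_2) with (p := p); [| rewrite E; ring].
  intros [x Hx]. lia.
Qed.

Lemma no_sq3 p q : (p * p = 3 * q * q)%Z -> q = 0%Z.
Proof.
  intros E. apply (descent 3 1 prime_3) with (p := p); [| rewrite E; ring].
  intros [x Hx]. lia.
Qed.

Lemma no_sq6 p q : (p * p = 6 * q * q)%Z -> q = 0%Z.
Proof.
  intros E. apply (descent 2 3 prime_2) with (p := p); [| rewrite E; ring].
  intros [x Hx]. lia.
Qed.

Lemma sqrt_irr n (Hn : forall p q, (p * p = n * q * q)%Z -> q = 0%Z) (H0 : (0 <= n)%Z) :
  forall p q : Z, q <> 0%Z -> sqrt (IZR n) <> IZR p / IZR q.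
Proof.
  intros p q Hq E.
  assert (Hq' : IZR q <> 0) by (apply not_0_IZR; auto).
  assert (IZR (p * p) = IZR (n * q * q)).
  { rewrite !mult_IZR. assert (IZR p = sqrt (IZR n) * IZR q) by (rewrite E; field; auto).
    rewrite H. replace (sqrt (IZR n) * IZR q * (sqrt (IZR n) * IZR q))
      with (sqrt (IZR n) * sqrt (IZR n) * IZR q * IZR q) by ring.
    rewrite sqrt_sqrt; [ring|]. apply IZR_le; auto. }
  apply eq_IZR in H. apply Hn in H. auto.
Qed.

Lemma abs_IZR_ge1' z : z <> 0%Z -> 1 <= Rabs (IZR z).
Proof. intros H. rewrite <- abs_IZR. apply IZR_le. lia. Qed.

Lemma irr3 : irrational (sqrt 3 / 1).
Proof.
  intros [p [q [Hq E]]]. rewrite Rdiv_1 in E.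
  exact (sqrt_irr 3 no_sq3 ltac:(lia) p q Hq E).
Qed.

Lemma sq2 : sqrt 2 * sqrt 2 = 2. Proof. apply sqrt_sqrt. lra. Qed.
Lemma sq3 : sqrt 3 * sqrt 3 = 3. Proof. apply sqrt_sqrt. lra. Qed.

Lemma indep23 : Z_lin_indep3 (sqrt 2) (sqrt 3 / 1).
Proof.
  intros a b c E. rewrite Rdiv_1 in E.
  pose proof sq2; pose proof sq3.
  assert (Hx : 0 < sqrt 2) by (apply sqrt_lt_R0; lra).
  assert (E1 : IZR a + IZR b * sqrt 2 = - IZR c * sqrt 3) by lra.
  assert (E2 : IZR a * IZR a + 2 * IZR a * IZR b * sqrt 2 + 2 * IZR b * IZR b = 3 * IZR c * IZR c).
  { transitivity ((IZR a + IZR b * sqrt 2) * (IZR a + IZR b * sqrt 2)).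
    - replace ((IZR a + IZR b * sqrt 2) * (IZR a + IZR b * sqrt 2))
        with (IZR a * IZR a + 2 * IZR a * IZR b * sqrt 2 + IZR b * IZR b * (sqrt 2 * sqrt 2)) by ring.
      rewrite H. ring.
    - rewrite E1. replace (- IZR c * sqrt 3 * (- IZR c * sqrt 3)) with (IZR c * IZR c * (sqrt 3 * sqrt 3)) by ring.
      rewrite H0. ring. }
  destruct (Z.eq_dec (a * b) 0) as [Hab | Hab].
  - destruct (Z.eq_dec b 0) as [Hb | Hb].
    + subst b. destruct (Z.eq_dec c 0) as [Hc | Hc].
      * subst c. repeat split; auto. apply eq_IZR. lra.
      * exfalso. apply (sqrt_irr 3 no_sq3 ltac:(lia) (- a) c Hc).
        rewrite opp_IZR. field_simplify_eq; [| apply not_0_IZR; auto]. lra.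
    + assert (a = 0%Z) by nia. subst a.
      assert (E3 : IZR (2 * b * (2 * b)) = IZR (6 * c * c)).
      { rewrite !mult_IZR. lra. }
      apply eq_IZR, no_sq6 in E3. subst c.
      exfalso. apply Hb. apply eq_IZR. simpl in E1. nra.
  - exfalso. apply (sqrt_irr 2 no_sq2 ltac:(lia) (3 * c * c - a * a - 2 * b * b) (2 * a * b) ltac:(lia)).
    assert (IZR a * IZR b <> 0) by (rewrite <- mult_IZR; apply not_0_IZR; auto).
    rewrite minus_IZR, minus_IZR, !mult_IZR. field_simplify_eq; [lra | split; intro Hz; apply H1; rewrite Hz; ring].
Qed.

Lemma sqrt3_bounds : 1.7 < sqrt 3 < 1.8.
Proof.
  pose proof sq3. assert (0 <= sqrt 3) by apply sqrt_pos. split; nra.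
Qed.

Lemma nonliou3 : ~ Liouville (sqrt 3 / 1).
Proof.
  intros [_ HL]. rewrite Rdiv_1 in HL.
  destruct (HL 5 ltac:(lra) ((1%Z, 1%nat) :: (2%Z, 1%nat) :: nil)) as [p [q [Hin [Hq Hlt]]]].
  rewrite Rpower_Ropp in Hlt.
  set (Q := INR q) in *.
  assert (HQ1 : 1 <= Q) by (unfold Q; apply (le_INR 1); lia).
  replace 5 with (INR 5) in Hlt by (simpl; lra).
  rewrite Rpower_pow in Hlt by lra.
  pose proof sqrt3_bounds as [Hs1 Hs2]. pose proof sq3 as H3.
  set (x := sqrt 3) in *.
  set (d := Rabs (x - IZR p / Q)) in *.
  assert (HQ5 : 1 <= Q ^ 5) by (apply pow_ge1; lra).
  assert (Hd1 : d * Q ^ 5 < 1).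
  { apply Rmult_lt_compat_r with (r := Q ^ 5) in Hlt; [| lra].
    rewrite Rinv_l in Hlt by lra. exact Hlt. }
  assert (Hd0 : 0 <= d) by apply Rabs_pos.
  assert (Hdlt1 : d < 1) by nra.
  destruct (Nat.eq_dec q 1) as [Eq1 | Nq1].
  - subst q. unfold Q in *. simpl INR in *.
    assert (Hb : Rabs (x - IZR p) < 1) by (unfold d in Hdlt1; rewrite Rdiv_1 in Hdlt1; exact Hdlt1).
    apply Rabs_def2 in Hb. destruct Hb as [Hb1 Hb2].
    assert (0 < p)%Z by (apply lt_IZR; lra).
    assert (p < 3)%Z by (apply lt_IZR; lra).
    apply Hin. assert (p = 1 \/ p = 2)%Z as [-> | ->] by lia; simpl; auto.
  - assert (HQ2 : 2 <= Q) by (unfold Q; apply (le_INR 2); lia).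
    assert (Hz : (3 * Z.of_nat q * Z.of_nat q - p * p)%Z <> 0%Z).
    { intro E. assert (Z.of_nat q = 0%Z).
      { apply (no_sq3 p). lia. }
      lia. }
    assert (HZ : 1 <= Rabs (3 * Q * Q - IZR p * IZR p)).
    { pose proof (abs_IZR_ge1' _ Hz) as HH. rewrite minus_IZR, !mult_IZR in HH.
      unfold Q. rewrite INR_IZR_INZ. exact HH. }
    replace (3 * Q * Q - IZR p * IZR p) with ((x * Q - IZR p) * (x * Q + IZR p)) in HZ
      by (replace (3 * Q * Q) with (x * x * Q * Q) by (rewrite H3; ring); ring).
    assert (E1 : Rabs (x * Q - IZR p) = Q * d).
    { unfold d. replace (x * Q - IZR p) with (Q * (x - IZR p / Q)) by (field; lra).
      rewrite Rabs_mult, Rabs_right by lra. reflexivity. }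
    assert (E2 : Rabs (x * Q + IZR p) <= 5 * Q).
    { replace (x * Q + IZR p) with (2 * x * Q - (x * Q - IZR p)) by ring.
      eapply Rle_trans; [apply Rabs_triang|]. rewrite Rabs_Ropp, E1.
      rewrite Rabs_right by nra. nra. }
    rewrite Rabs_mult, E1 in HZ.
    assert (1 <= Q * d * (5 * Q)).
    { eapply Rle_trans; [exact HZ|]. apply Rmult_le_compat_l; [nra | exact E2]. }
    assert (H8 : 8 <= Q * Q * Q) by nra.
    assert (H9 : Q * Q * Q * 1 <= Q * Q * Q * (Q * d * (5 * Q))) by (apply Rmult_le_compat_l; nra).
    replace (Q * Q * Q * (Q * d * (5 * Q))) with (5 * (d * Q ^ 5)) in H9 by ring.
    lra.
Qed.

Theorem mainTheorem6 :
  (forall a1 a2 : C,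
    Im a2 <> 0 ->
    irrational (Im a1 / Im a2) ->
    ~ Liouville (Im a1 / Im a2) ->
    rational (Re a2) ->
    Z_lin_indep3 (Re a1) (Im a1 / Im a2) ->
    GH a1 a2 (RtoC 0) /\ denseC (M2 a1 a2) /\ G_deltaC (M2 a1 a2)) /\
  (let a1 : C := (sqrt 2, sqrt 3) in
   let a2 : C := (1, 1) in
   GH a1 a2 (RtoC 0) /\ denseC (M2 a1 a2) /\ G_deltaC (M2 a1 a2)).
Proof.
  assert (P1 : forall a1 a2 : C,
    Im a2 <> 0 ->
    irrational (Im a1 / Im a2) ->
    ~ Liouville (Im a1 / Im a2) ->
    rational (Re a2) ->
    Z_lin_indep3 (Re a1) (Im a1 / Im a2) ->
    GH a1 a2 (RtoC 0) /\ denseC (M2 a1 a2) /\ G_deltaC (M2 a1 a2)).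
  { intros a1 a2 H1 H2 H3 H4 H5. apply general.
    - apply symbol_LB; auto.
    - apply DS_proof; auto. }
  split; [exact P1|].
  intros a1 a2. apply P1.
  - unfold a2; simpl. lra.
  - exact irr3.
  - exact nonliou3.
  - exists 1%Z, 1%Z. split; [lia|]. unfold a2; simpl. field.
  - exact indep23.
Qed.
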